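(* Assume status quo bias: $f_1(x,y)\ge f_0(x,y)$ for all $x,y\in[0,1]$. Let $f(\pi)=\pi f_1(0,\pi)+(1-\pi)f_0(0,\pi)$ be a $k$-equilibrium discrete-time (resp. continuous-time) dynamics with stable equilibria $\pi^{\mathfrak e}_1\le\dots\le\pi^{\mathfrak e}_k$ and delimiting points $\delta_1,\dots,\delta_{k-1}$, and suppose that for each $i\in\{1,\dots,k\}$ there exist $r_i>0$ and $L_i\in[0,1)$ with $f'(\pi)\le L_i$ for all $\pi\in[\pi^{\mathfrak e}_i-r_i,\pi^{\mathfrak e}_i+r_i]\cap[0,1]$. Let $j$ be the initially advantaged group ($\pi_0(1|j)\ge\pi_0(1|\neg j)$) and suppose $\pi_0(1|\neg j)\neq\delta_i$ for all $i\in\{1,\dots,k-1\}$. Then applying the AA1 policy at all times reaches equality in discrete time (resp. continuous time): $|\pi_t(1|A)-\pi_t(1|B)|\to0$ as $t\to\infty$.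
   Context: Two groups $A,B$; $\neg j$ is the other group. Group $j$ has qualification profile $\pi_t(1|j)\in[0,1]$. Selection rates $\beta_t(v;j)=\tau(v;j)\pi_t(v|j)$. Dynamics: continuously differentiable $f_0,f_1:[0,1]^2\to[0,1]$; discrete time $\pi_{t+1}(1|j)=\pi_t(1|j)f_1(\beta_t(0;j),\beta_t(1;j))+(1-\pi_t(1|j))f_0(\beta_t(0;j),\beta_t(1;j))$; continuous time $\frac{d}{dt}\pi_t(1|j)=\pi_t(1|j)(f_1(\beta_t(0;j),\beta_t(1;j))-1)+(1-\pi_t(1|j))f_0(\beta_t(0;j),\beta_t(1;j))$. Under the unconstrained policy (selection rates $(0,\pi)$) each group follows $\pi_{t+1}=f(\pi_t)$ (DT) or $\dot\pi=f(\pi)-\pi$ (CT). Definition: $f$ is a $k$-equilibrium DT (resp. CT) dynamics if it is continuously differentiable and has fixed points $\pi^{\mathfrak e}_1\le\dots\le\pi^{\mathfrak e}_k$ and fixed points $\delta_i\in(\pi^{\mathfrak e}_i,\pi^{\mathfrak e}_{i+1})$, $i=1,\dots,k-1$, such that, with basins $I_1=[0,\delta_1)$, $I_i=(\delta_{i-1},\delta_i)$ for $1<i<k$, $I_k=(\delta_{k-1},1]$ (and $I_1=[0,1]$ if $k=1$), every $\pi_0\in I_i$ yields $\pi_t\to\pi^{\mathfrak e}_i$ as $t\to\infty$, where $\pi_t=f^t(\pi_0)$ (DT) or $\pi_t$ solves $\dot\pi=f(\pi)-\pi$ from $\pi_0$ (CT). Group $j$ is advantaged at $t$ if $\pi_t(1|j)\ge\pi_t(1|\neg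 j)$. AA1 w.r.t. advantaged $j$: $\tau(1;j)=\pi_t(1|\neg j)/\pi_t(1|j)$, $\tau(0;j)=0$, $\tau(1;\neg j)=1$, $\tau(0;\neg j)=0$, i.e. selection rates $\beta_t(0;\cdot)=0$, $\beta_t(1;\cdot)=\pi_t(1|\neg j)$ for both groups; ''applied at all times'' means w.r.t. the group advantaged at the current time. *)

(* Defs.v *)
From Stdlib Require Import Reals Lra.
Open Scope R_scope.

Definition I01 (x : R) : Prop := 0 <= x <= 1.
Definition Sq01 (x y : R) : Prop := I01 x /\ I01 y.

(* derivative of g at x relative to the domain D (one-sided at endpoints) *)
Definition deriv_within (D : R -> Prop) (g : R -> R) (x l : R) : Prop :=
  forall eps, 0 < eps -> exists delta, 0 < delta /\
    forall y, D y -> Rabs (y - x) < delta ->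
      Rabs (g y - g x - l * (y - x)) <= eps * Rabs (y - x).

Definition cont_within (D : R -> Prop) (g : R -> R) : Prop :=
  forall x, D x -> forall eps, 0 < eps -> exists delta, 0 < delta /\
    forall y, D y -> Rabs (y - x) < delta -> Rabs (g y - g x) < eps.

Definition C1_01 (g : R -> R) : Prop :=
  exists g' : R -> R,
    (forall x, I01 x -> deriv_within I01 g x (g' x)) /\ cont_within I01 g'.

Definition cont2_Sq (h : R -> R -> R) : Prop :=
  forall x y, Sq01 x y -> forall eps, 0 < eps -> exists delta, 0 < delta /\
    forall x' y', Sq01 x' y' -> Rabs (x' - x) < delta -> Rabs (y' - y) < delta ->
      Rabs (h x' y' - h x y) < eps.

Definition C1_Sq (h : R -> R -> R) : Prop :=
  exists hx hy : R -> R -> R,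
    cont2_Sq hx /\ cont2_Sq hy /\
    forall x y, Sq01 x y -> forall eps, 0 < eps -> exists delta, 0 < delta /\
      forall x' y', Sq01 x' y' -> Rabs (x' - x) < delta -> Rabs (y' - y) < delta ->
        Rabs (h x' y' - h x y - hx x y * (x' - x) - hy x y * (y' - y))
          <= eps * (Rabs (x' - x) + Rabs (y' - y)).

Definition cv_infty_R (x : R -> R) (l : R) : Prop :=
  forall eps, 0 < eps -> exists T, forall t, T <= t -> Rabs (x t - l) < eps.

Definition CT_sol (f : R -> R) (p0 : R) (p : R -> R) : Prop :=
  p 0 = p0 /\ (forall t, 0 <= t -> I01 (p t)) /\
  forall t, 0 <= t -> deriv_within (fun s => 0 <= s) p t (f (p t) - p t).

(* basin I_i (indices 1..k); I_1 = [0,1] if k = 1 *)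
Definition in_basin (k : nat) (delta : nat -> R) (i : nat) (p : R) : Prop :=
  I01 p /\ (i = 1%nat \/ delta (i - 1)%nat < p) /\ (i = k \/ p < delta i).

(* the fixed-point structure shared by the DT and CT definitions;
   equilibria pe 1 <= ... <= pe k, delimiting points delta 1 .. delta (k-1) *)
Definition k_eq_points (f : R -> R) (k : nat) (pe delta : nat -> R) : Prop :=
  (1 <= k)%nat /\
  C1_01 f /\
  (forall i, (1 <= i <= k)%nat -> I01 (pe i) /\ f (pe i) = pe i) /\
  (forall i, (1 <= i < k)%nat ->
     pe i <= pe (S i) /\ pe i < delta i < pe (S i) /\ f (delta i) = delta i).

Definition k_eq_DT (f : R -> R) (k : nat) (pe delta : nat -> R) : Prop :=
  k_eq_points f k pe delta /\
  forall i, (1 <= i <= k)%nat -> forall p0, in_basin k delta i p0 ->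
    Un_cv (fun t => Nat.iter t f p0) (pe i).

Definition k_eq_CT (f : R -> R) (k : nat) (pe delta : nat -> R) : Prop :=
  k_eq_points f k pe delta /\
  forall i, (1 <= i <= k)%nat -> forall p0, in_basin k delta i p0 ->
    forall p, CT_sol f p0 p -> cv_infty_R p (pe i).

Inductive group : Type := GA | GB.
Definition other (j : group) : group := match j with GA => GB | GB => GA end.

(* a state assigns to each group its qualification profile pi(1|g) *)
Definition state := group -> R.

(* the group advantaged in state s (A in case of a tie; the resulting
   selection rates do not depend on the tie-breaking) *)
Definition advantaged (s : state) : group :=
  if Rle_dec (s GB) (s GA) then GA else GB.

(* AA1 selection rates beta(v; g), v = 0 / 1, w.r.t. the currently
   advantaged group: beta(0;.) = 0, beta(1;.) = pi(1 | not j) *)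
Definition AA1_beta0 (s : state) (g : group) : R := 0.
Definition AA1_beta1 (s : state) (g : group) : R := s (other (advantaged s)).

Definition DT_update (f0 f1 : R -> R -> R) (p b0 b1 : R) : R :=
  p * f1 b0 b1 + (1 - p) * f0 b0 b1.
Definition CT_field (f0 f1 : R -> R -> R) (p b0 b1 : R) : R :=
  p * (f1 b0 b1 - 1) + (1 - p) * f0 b0 b1.

Definition AA1_step (f0 f1 : R -> R -> R) (s : state) : state :=
  fun g => DT_update f0 f1 (s g) (AA1_beta0 s g) (AA1_beta1 s g).

Definition AA1_DT_traj (f0 f1 : R -> R -> R) (s0 : state) (t : nat) : state :=
  Nat.iter t (AA1_step f0 f1) s0.

Definition AA1_CT_sol (f0 f1 : R -> R -> R) (s0 : state) (pi : R -> state) : Prop :=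
  (forall g, pi 0 g = s0 g) /\
  (forall t g, 0 <= t -> I01 (pi t g)) /\
  forall t g, 0 <= t ->
    deriv_within (fun s => 0 <= s) (fun s => pi s g) t
      (CT_field f0 f1 (pi t g) (AA1_beta0 (pi t) g) (AA1_beta1 (pi t) g)).

(* Main.v *)
Require Import Defs.
From Stdlib Require Import Reals Lra Lia Ranalysis5.
From Coquelicot Require Import Coquelicot.
Open Scope R_scope.

Lemma Rabs_le_b x e : Rabs x <= e -> -e <= x <= e.
Proof. unfold Rabs; destruct Rcase_abs; lra. Qed.
Lemma Rabs_lt_b x e : Rabs x < e -> -e < x < e.
Proof. unfold Rabs; destruct Rcase_abs; lra. Qed.
Lemma Rabs_lt_i x e : -e < x < e -> Rabs x < e.
Proof. unfold Rabs; destruct Rcase_abs; lra. Qed.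
Lemma Rabs_le_i x e : -e <= x <= e -> Rabs x <= e.
Proof. unfold Rabs; destruct Rcase_abs; lra. Qed.

Lemma dw_lim F t l : 0 < t -> deriv_within (fun s => 0 <= s) F t l ->
  derivable_pt_lim F t l.
Proof.
  intros Ht H eps Heps.
  destruct (H (eps/2)) as [d [Hd H']]; [lra|].
  assert (Hm : 0 < Rmin d t) by (apply Rmin_pos; lra).
  exists (mkposreal _ Hm). intros h Hh0 Hh. simpl in Hh.
  assert (Hh1 : Rabs h < d) by (eapply Rlt_le_trans; [exact Hh| apply Rmin_l]).
  assert (Hh2 : Rabs h < t) by (eapply Rlt_le_trans; [exact Hh| apply Rmin_r]).
  apply Rabs_lt_b in Hh2.
  specialize (H' (t+h)). replace (t + h - t) with h in H' by ring.
  assert (E := H' ltac:(lra) Hh1).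
  replace ((F (t+h) - F t)/h - l) with ((F (t + h) - F t - l * h) / h) by (field; auto).
  unfold Rdiv. rewrite Rabs_mult, Rabs_inv.
  assert (0 < Rabs h) by (apply Rabs_pos_lt; auto).
  apply (Rmult_lt_reg_r (Rabs h)); auto.
  rewrite Rmult_assoc, Rinv_l by lra. nra.
Qed.

Lemma dw_cont (D : R -> Prop) F x l : deriv_within D F x l ->
  forall eps, 0 < eps -> exists d, 0 < d /\ forall y, D y -> Rabs (y - x) < d -> Rabs (F y - F x) < eps.
Proof.
  intros H eps Heps.
  destruct (H 1) as [d [Hd H']]; [lra|].
  set (M := Rabs l + 1).
  assert (HM : 0 < M) by (unfold M; pose proof (Rabs_pos l); lra).
  exists (Rmin d (eps / M)). split. apply Rmin_pos; auto. apply Rdiv_lt_0_compat; auto.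
  intros y Dy Hy.
  assert (Hy1 : Rabs (y-x) < d) by (eapply Rlt_le_trans; [exact Hy| apply Rmin_l]).
  assert (Hy2 : Rabs (y-x) < eps/M) by (eapply Rlt_le_trans; [exact Hy| apply Rmin_r]).
  specialize (H' y Dy Hy1).
  replace (F y - F x) with ((F y - F x - l * (y - x)) + l * (y-x)) by ring.
  eapply Rle_lt_trans. apply Rabs_triang. rewrite Rabs_mult.
  assert (Rabs (y - x) * M < eps).
  { apply (Rmult_lt_compat_r M) in Hy2; auto. unfold Rdiv in Hy2.
    rewrite Rmult_assoc, Rinv_l in Hy2 by lra. lra. }
  unfold M in *. pose proof (Rabs_pos l). pose proof (Rabs_pos (y-x)). nra.
Qed.

Lemma mvt F F' : (forall t, 0 < t -> derivable_pt_lim F t (F' t)) ->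
  forall a b, 0 < a -> a <= b -> exists c, a <= c <= b /\ F b - F a = F' c * (b - a).
Proof.
  intros H a b Ha Hab.
  destruct (MVT_gen F a b F') as [c [Hc E]].
  - intros x Hx. rewrite Rmin_left in Hx by lra. rewrite Rmax_right in Hx by lra.
    apply is_derive_Reals. apply H; lra.
  - intros x Hx. rewrite Rmin_left in Hx by lra. rewrite Rmax_right in Hx by lra.
    apply derivable_continuous_pt. exists (F' x). apply H; lra.
  - rewrite Rmin_left in Hc by lra. rewrite Rmax_right in Hc by lra.
    exists c; auto.
Qed.

Lemma mono F F' : (forall t, 0 < t -> derivable_pt_lim F t (F' t)) ->
  (forall t, 0 < t -> F' t <= 0) ->
  forall a b, 0 < a -> a <= b -> F b <= F a.
Proof.
  intros H H' a b Ha Hab. destruct (mvt F F' H a b Ha Hab) as [c [Hc E]].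
  assert (F' c <= 0) by (apply H'; lra). nra.
Qed.

Lemma sign_a (g : R -> R) pe a : I01 pe -> 0 < pe -> g pe = 1 ->
  (forall y, I01 y -> g y <= 1) -> deriv_within I01 g pe a -> 0 <= a.
Proof.
  intros Hp Hp0 Hg Hle H. destruct (Rle_lt_dec 0 a) as [|Ha]; auto. exfalso.
  destruct (H (-a/2)) as [d [Hd H']]; [lra|].
  set (s := Rmin (d/2) pe).
  assert (Hs0 : 0 < s) by (apply Rmin_pos; lra).
  assert (Hs1 : s <= d/2) by apply Rmin_l.
  assert (Hs2 : s <= pe) by apply Rmin_r.
  unfold I01 in *.
  assert (Iy : 0 <= pe - s <= 1) by lra.
  specialize (H' (pe - s) Iy).
  replace (pe - s - pe) with (-s) in H' by ring.
  rewrite Rabs_Ropp, Rabs_right in H' by lra.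
  specialize (H' ltac:(lra)). apply Rabs_le_b in H'.
  specialize (Hle _ Iy). nra.
Qed.

Lemma sign_b (h : R -> R) pe b : I01 pe -> pe < 1 -> h pe = 0 ->
  (forall y, I01 y -> 0 <= h y) -> deriv_within I01 h pe b -> 0 <= b.
Proof.
  intros Hp Hp0 Hg Hle H. destruct (Rle_lt_dec 0 b) as [|Ha]; auto. exfalso.
  destruct (H (-b/2)) as [d [Hd H']]; [lra|].
  set (s := Rmin (d/2) (1-pe)).
  assert (Hs0 : 0 < s) by (apply Rmin_pos; lra).
  assert (Hs1 : s <= d/2) by apply Rmin_l.
  assert (Hs2 : s <= 1 - pe) by apply Rmin_r.
  unfold I01 in *.
  assert (Iy : 0 <= pe + s <= 1) by lra.
  specialize (H' (pe + s) Iy).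
  replace (pe + s - pe) with s in H' by ring.
  rewrite Rabs_right in H' by lra.
  specialize (H' ltac:(lra)). apply Rabs_le_b in H'.
  specialize (Hle _ Iy). nra.
Qed.

Lemma c_lt1 (g h F : R -> R) pe a b fdv L : I01 pe ->
  (forall y, I01 y -> 0 <= h y /\ g y <= 1) ->
  (forall y, F y = y * g y + (1 - y) * h y) ->
  deriv_within I01 g pe a -> deriv_within I01 h pe b -> deriv_within I01 F pe fdv ->
  fdv <= L -> L < 1 -> g pe - h pe < 1.
Proof.
  intros Hp Hb HF Hg Hh HFd HL HL1.
  destruct (Rlt_le_dec (g pe - h pe) 1) as [|Hc]; auto. exfalso.
  destruct (Hb pe Hp) as [Hh0 Hg1].
  assert (G1 : g pe = 1) by lra. assert (H0 : h pe = 0) by lra.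
  assert (SA : 0 < pe -> 0 <= a) by (intro; eapply sign_a; eauto; intros; apply Hb; auto).
  assert (SB : pe < 1 -> 0 <= b) by (intro; eapply sign_b; eauto; intros; apply Hb; auto).
  set (e := (1 - L)/8).
  assert (He : 0 < e) by (unfold e; lra).
  destruct (Hg e He) as [d1 [Hd1 E1]].
  destruct (Hh e He) as [d2 [Hd2 E2]].
  destruct (HFd e He) as [d3 [Hd3 E3]].
  set (M := Rabs a + Rabs b + 1).
  assert (HM : 0 < M) by (unfold M; pose proof (Rabs_pos a); pose proof (Rabs_pos b); lra).
  set (s := Rmin (Rmin (d1/2) (d2/2)) (Rmin (d3/2) (e / M))).
  assert (s0 : 0 < s) by (repeat apply Rmin_pos; try lra; apply Rdiv_lt_0_compat; lra).
  assert (s1 : s <= d1/2) by (unfold s; eapply Rle_trans; [apply Rmin_l|apply Rmin_l]).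
  assert (s2 : s <= d2/2) by (unfold s; eapply Rle_trans; [apply Rmin_l|apply Rmin_r]).
  assert (s3 : s <= d3/2) by (unfold s; eapply Rle_trans; [apply Rmin_r|apply Rmin_l]).
  assert (s4 : s <= e/M) by (unfold s; eapply Rle_trans; [apply Rmin_r|apply Rmin_r]).
  assert (s5 : s * M <= e).
  { apply (Rmult_le_compat_r M) in s4; [|lra]. unfold Rdiv in s4.
    rewrite Rmult_assoc, Rinv_l in s4 by lra. lra. }
  assert (FP : F pe = pe) by (rewrite HF, G1, H0; ring).
  pose proof (Rabs_pos a); pose proof (Rabs_pos b).
  pose proof (Rle_abs a); pose proof (Rle_abs b);
  pose proof (Rle_abs (-a)); pose proof (Rle_abs (-b)).
  rewrite Rabs_Ropp in *.
  unfold I01 in Hp.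
  destruct (Rlt_le_dec pe 1) as [Hp1|Hp1].
  -
    set (t := Rmin s (1 - pe)).
    assert (t0 : 0 < t) by (apply Rmin_pos; lra).
    assert (t1 : t <= s) by apply Rmin_l. assert (t2 : t <= 1 - pe) by apply Rmin_r.
    assert (Iy : I01 (pe + t)) by (unfold I01; lra).
    assert (At : Rabs (pe + t - pe) = t) by (replace (pe+t-pe) with t by ring; apply Rabs_right; lra).
    specialize (E1 _ Iy); specialize (E2 _ Iy); specialize (E3 _ Iy).
    rewrite At in E1, E2, E3.
    apply Rabs_le_b in E1; [|lra]. apply Rabs_le_b in E2; [|lra]. apply Rabs_le_b in E3; [|lra].
    replace (pe + t - pe) with t in E1, E2, E3 by ring.
    rewrite FP, HF in E3. rewrite G1 in E1. rewrite H0 in E2.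
    assert (Sb := SB Hp1).
    set (u := g (pe + t) - 1 - a * t) in *.
    set (v := h (pe + t) - 0 - b * t) in *.
    assert (Eg : g (pe + t) = 1 + a * t + u) by (unfold u; ring).
    assert (Eh : h (pe + t) = b * t + v) by (unfold v; ring).
    rewrite Eg, Eh in E3.
    assert (Hya : (pe + t) * a >= - t * Rabs a).
    { destruct (Rlt_le_dec 0 pe). assert (0 <= a) by auto. nra. nra. }
    assert (Hyb : (1 - (pe + t)) * b >= 0) by nra.
    (* t * (fdv - 1 - ya - (1-y) b) = y u + (1-y) v - w *)
    assert (K : t * fdv >= t * (1 - t * Rabs a - 3 * e)) by nra.
    assert (fdv >= 1 - t * Rabs a - 3 * e) by nra.
    assert (t * Rabs a <= e) by (unfold M in s5; nra).
    unfold e in *; lra.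
  - assert (Hp2 : pe = 1) by lra.
    set (t := Rmin s pe).
    assert (t0 : 0 < t) by (apply Rmin_pos; lra).
    assert (t1 : t <= s) by apply Rmin_l. assert (t2 : t <= pe) by apply Rmin_r.
    assert (Iy : I01 (pe - t)) by (unfold I01; lra).
    assert (At : Rabs (pe - t - pe) = t) by (replace (pe-t-pe) with (-t) by ring; rewrite Rabs_Ropp; apply Rabs_right; lra).
    specialize (E1 _ Iy); specialize (E2 _ Iy); specialize (E3 _ Iy).
    rewrite At in E1, E2, E3.
    apply Rabs_le_b in E1; [|lra]. apply Rabs_le_b in E2; [|lra]. apply Rabs_le_b in E3; [|lra].
    replace (pe - t - pe) with (-t) in E1, E2, E3 by ring.
    rewrite FP, HF in E3. rewrite G1 in E1. rewrite H0 in E2.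
    assert (Sa := SA ltac:(lra)).
    set (u := g (pe - t) - 1 - a * - t) in *.
    set (v := h (pe - t) - 0 - b * - t) in *.
    assert (Eg : g (pe - t) = 1 - a * t + u) by (unfold u; ring).
    assert (Eh : h (pe - t) = - b * t + v) by (unfold v; ring).
    rewrite Eg, Eh in E3.
    assert (Hya : (pe - t) * a >= 0) by nra.
    assert (Hyb : (1 - (pe - t)) * b >= - t * Rabs b) by (rewrite Hp2; nra).
    assert (K : t * fdv >= t * (1 - t * Rabs b - 3 * e)) by (rewrite Hp2 in *; nra).
    assert (fdv >= 1 - t * Rabs b - 3 * e) by nra.
    assert (t * Rabs b <= e) by (unfold M in s5; nra).
    unfold e in *; lra.
Qed.

Lemma basin k (delta : nat -> R) p : (1 <= k)%nat -> I01 p ->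
  (forall i, (1 <= i <= k - 1)%nat -> p <> delta i) ->
  exists i, (1 <= i <= k)%nat /\ in_basin k delta i p.
Proof.
  intros Hk Hp Hnd.
  assert (C : forall n, (1 <= n <= k)%nat ->
    (exists i, (1 <= i < n)%nat /\ (i = 1%nat \/ delta (i - 1)%nat < p) /\ p < delta i)
    \/ (n = 1%nat \/ delta (n - 1)%nat < p)).
  { induction n as [|n IH]; intros Hn; [lia|].
    destruct (Nat.eq_dec n 0) as [->|Hn0]; [right; left; reflexivity|].
    destruct (IH ltac:(lia)) as [[i [Hi1 [Hi2 Hi3]]]|Hr].
    - left. exists i. split; [lia|auto].
    - destruct (Rlt_le_dec p (delta n)) as [Hl|Hl].
      + left. exists n. split; [lia|]. split; auto.
      + right. right. replace (S n - 1)%nat with n by lia.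
        assert (p <> delta n) by (apply Hnd; lia). lra. }
  destruct (C k ltac:(lia)) as [[i [Hi1 [Hi2 Hi3]]]|Hr].
  - exists i. split; [lia|]. split; auto.
  - exists k. split; [lia|]. split; auto.
Qed.

Lemma adv (s : state) j : s j >= s (other j) -> s (other (advantaged s)) = s (other j).
Proof. destruct j; unfold advantaged; destruct Rle_dec; simpl; intros; lra. Qed.

Lemma absD (s : state) j : s j >= s (other j) -> Rabs (s GA - s GB) = s j - s (other j).
Proof. destruct j; simpl; unfold Rabs; destruct Rcase_abs; lra. Qed.

Lemma conv01 q a b : I01 q -> I01 a -> I01 b -> I01 (q * a + (1 - q) * b).
Proof. unfold I01; intros; split; nra. Qed.

Lemma dy (h : R -> R -> R) : C1_Sq h -> forall y, I01 y ->
  exists b, deriv_within I01 (fun y => h 0 y) y b.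
Proof.
  intros [hx [hy [_ [_ Hd]]]] y Hy. exists (hy 0 y). intros eps Heps.
  assert (S0 : Sq01 0 y) by (split; [unfold I01; lra|auto]).
  destruct (Hd 0 y S0 eps Heps) as [d [Hd0 Hd1]]. exists d. split; auto.
  intros y' Hy' Hyd.
  assert (S1 : Sq01 0 y') by (split; [unfold I01; lra|auto]).
  assert (Z : Rabs (0 - 0) < d) by (rewrite Rminus_0_r, Rabs_R0; auto).
  specialize (Hd1 0 y' S1 Z Hyd).
  rewrite Rminus_0_r, Rabs_R0, Rmult_0_r, Rminus_0_r, Rplus_0_l in Hd1. exact Hd1.
Qed.

Lemma cont_c (f0 f1 : R -> R -> R) : C1_Sq f0 -> C1_Sq f1 -> forall y0, I01 y0 ->
  forall eps, 0 < eps -> exists d, 0 < d /\ forall y, I01 y -> Rabs (y - y0) < d ->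
   Rabs ((f1 0 y - f0 0 y) - (f1 0 y0 - f0 0 y0)) < eps.
Proof.
  intros H0 H1 y0 Hy0 eps Heps.
  destruct (dy f0 H0 y0 Hy0) as [b0 D0]. destruct (dy f1 H1 y0 Hy0) as [b1 D1].
  destruct (dw_cont _ _ _ _ D0 (eps/2)) as [d0 [Hd0 E0]]; [lra|].
  destruct (dw_cont _ _ _ _ D1 (eps/2)) as [d1 [Hd1 E1]]; [lra|].
  exists (Rmin d0 d1). split; [apply Rmin_pos; auto|].
  intros y Hy Hyd.
  assert (A0 : Rabs (y - y0) < d0) by (eapply Rlt_le_trans; [exact Hyd|apply Rmin_l]).
  assert (A1 : Rabs (y - y0) < d1) by (eapply Rlt_le_trans; [exact Hyd|apply Rmin_r]).
  specialize (E0 y Hy A0); specialize (E1 y Hy A1).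
  apply Rabs_lt_b in E0; apply Rabs_lt_b in E1. apply Rabs_lt_i. lra.
Qed.

Theorem mainTheorem11
  (f0 f1 : R -> R -> R)
  (Hf0 : C1_Sq f0) (Hf1 : C1_Sq f1)
  (Hf0r : forall x y, Sq01 x y -> I01 (f0 x y))
  (Hf1r : forall x y, Sq01 x y -> I01 (f1 x y))
  (Hsq : forall x y, Sq01 x y -> f1 x y >= f0 x y)
  (f : R -> R)
  (Hf : forall p, f p = p * f1 0 p + (1 - p) * f0 0 p)
  (fd : R -> R) (Hfd : forall p, I01 p -> deriv_within I01 f p (fd p))
  (k : nat) (pe delta : nat -> R)
  (Hslope : forall i, (1 <= i <= k)%nat ->
     exists r L, 0 < r /\ 0 <= L < 1 /\
       forall p, I01 p -> pe i - r <= p <= pe i + r -> fd p <= L)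
  (s0 : state) (Hs0 : forall g, I01 (s0 g))
  (j : group) (Hj : s0 j >= s0 (other j))
  (Hnd : forall i, (1 <= i <= k - 1)%nat -> s0 (other j) <> delta i) :
  (k_eq_DT f k pe delta ->
     Un_cv (fun t => Rabs (AA1_DT_traj f0 f1 s0 t GA - AA1_DT_traj f0 f1 s0 t GB)) 0)
  /\
  (k_eq_CT f k pe delta ->
     forall pi, AA1_CT_sol f0 f1 s0 pi ->
       cv_infty_R (fun t => Rabs (pi t GA - pi t GB)) 0).
Proof.
  set (o := other j). set (p0 := s0 o).
  set (c := fun y => f1 0 y - f0 0 y).
  assert (Sq0 : forall y, I01 y -> Sq01 0 y) by (intros; split; [unfold I01; lra|auto]).
  assert (Hgh : forall y, I01 y -> 0 <= f0 0 y /\ f1 0 y <= 1 /\ f0 0 y <= f1 0 y).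
  { intros y Hy. pose proof (Hf0r 0 y (Sq0 y Hy)); pose proof (Hf1r 0 y (Sq0 y Hy));
    pose proof (Hsq 0 y (Sq0 y Hy)); unfold I01 in *; lra. }
  assert (Hc01 : forall y, I01 y -> 0 <= c y <= 1).
  { intros y Hy. destruct (Hgh y Hy) as [? [? ?]]. unfold c. lra. }
  assert (Clt : forall i, (1 <= i <= k)%nat -> I01 (pe i) -> c (pe i) < 1).
  { intros i Hi Hpi. destruct (Hslope i Hi) as [r [L [Hr [HL Hfl]]]].
    destruct (dy f1 Hf1 _ Hpi) as [a Da]. destruct (dy f0 Hf0 _ Hpi) as [b Db].
    unfold c. eapply (c_lt1 (fun y => f1 0 y) (fun y => f0 0 y) f (pe i) a b (fd (pe i)) L); eauto.
    all: try (intros y Hy; destruct (Hgh y Hy) as [? [? ?]]; auto).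
    all: try (apply Hfl; auto; lra).
    all: try lra. }
  assert (Basin : (1 <= k)%nat -> exists i, (1 <= i <= k)%nat /\ in_basin k delta i p0).
  { intros Hk. apply basin; [exact Hk|apply Hs0|]. intros i Hi. apply Hnd. exact Hi. }
  assert (Eventually : forall i, (1 <= i <= k)%nat -> I01 (pe i) ->
     exists d, 0 < d /\ forall y, I01 y -> Rabs (y - pe i) < d -> c y <= (1 + c (pe i)) / 2).
  { intros i Hi Hpi. assert (Cl := Clt i Hi Hpi).
    destruct (cont_c f0 f1 Hf0 Hf1 (pe i) Hpi ((1 - c (pe i))/2)) as [d [Hd E]]; [lra|].
    exists d. split; auto. intros y Hy Hyd. specialize (E y Hy Hyd). apply Rabs_lt_b in E.
    unfold c in *. lra. }
  split.
  - intros [[Hk [_ [Hpe _]]] Hcv].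
    destruct (Basin Hk) as [i [Hi Hb]].
    destruct (Hpe i Hi) as [Hpi _].
    assert (Cv := Hcv i Hi p0 Hb).
    set (P := AA1_DT_traj f0 f1 s0).
    assert (Step : forall s : state, s j >= s o -> forall g,
        AA1_step f0 f1 s g = s g * f1 0 (s o) + (1 - s g) * f0 0 (s o)).
    { intros s Hs g. unfold AA1_step, DT_update, AA1_beta0, AA1_beta1. rewrite (adv s j Hs). reflexivity. }
    assert (Inv : forall t, (forall g, I01 (P t g)) /\ P t j >= P t o /\ P t o = Nat.iter t f p0).
    { induction t as [|t [IH1 [IH2 IH3]]].
      - simpl. auto.
      - change (P (S t)) with (AA1_step f0 f1 (P t)).
        assert (Io : I01 (P t o)) by auto.
        destruct (Hgh _ Io) as [? [? ?]].
        pose proof (Hf0r 0 _ (Sq0 _ Io)); pose proof (Hf1r 0 _ (Sq0 _ Io)).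
        split; [|split].
        + intros g. rewrite Step by auto. apply conv01; auto.
        + rewrite !Step by auto. assert (I01 (P t j)) by auto. unfold I01 in *. nra.
        + rewrite Step by auto. simpl. rewrite <- IH3, Hf. reflexivity. }
    assert (Dstep : forall t, P (S t) j - P (S t) o = (P t j - P t o) * c (Nat.iter t f p0)).
    { intros t. destruct (Inv t) as [_ [H2 H3]].
      change (P (S t)) with (AA1_step f0 f1 (P t)). rewrite !Step by auto.
      rewrite <- H3. unfold c. ring. }
    destruct (Eventually i Hi Hpi) as [d [Hd Ev]].
    set (cs := (1 + c (pe i)) / 2).
    assert (Hcs : 0 <= cs < 1).
    { assert (Cl := Clt i Hi Hpi). pose proof (Hc01 _ Hpi). unfold cs. lra. }
    destruct (Cv d Hd) as [N1 HN1].
    assert (Geo : forall n, P (N1 + n)%nat j - P (N1 + n)%nat o <= cs ^ n).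
    { induction n as [|n IH].
      - simpl. rewrite Nat.add_0_r. destruct (Inv N1) as [I1 _].
        pose proof (I1 j); pose proof (I1 o); unfold I01 in *; lra.
      - rewrite Nat.add_succ_r, Dstep. simpl.
        destruct (Inv (N1 + n)%nat) as [I1 [I2 I3]].
        assert (Ii : I01 (Nat.iter (N1 + n) f p0)) by (rewrite <- I3; auto).
        assert (c (Nat.iter (N1 + n) f p0) <= cs).
        { apply Ev; auto. apply HN1. lia. }
        pose proof (Hc01 _ Ii). pose proof (pow_le cs n ltac:(lra)). nra. }
    intros eps Heps.
    destruct (pow_lt_1_zero cs ltac:(rewrite Rabs_right; lra) eps Heps) as [N2 HN2].
    exists (N1 + N2)%nat. intros t Ht. unfold R_dist.
    destruct (Inv t) as [_ [I2 _]].
    fold P. rewrite Rminus_0_r, (absD (P t) j I2).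
    replace t with (N1 + (t - N1))%nat by lia.
    specialize (Geo (t - N1)%nat). specialize (HN2 (t - N1)%nat ltac:(lia)).
    replace (N1 + (t - N1))%nat with t in * by lia.
    rewrite Rabs_right in HN2 by (apply Rle_ge, pow_le; lra).
    fold o. rewrite Rabs_right by lra. lra.
  - intros [[Hk [_ [Hpe _]]] Hcv] pi [P0 [PI PD]].
    destruct (Basin Hk) as [i [Hi Hb]].
    destruct (Hpe i Hi) as [Hpi _].
    set (m := fun t => pi t (other (advantaged (pi t)))).
    assert (Im : forall t, 0 <= t -> I01 (m t)) by (intros; apply PI; auto).
    set (FG := fun g t => CT_field f0 f1 (pi t g) 0 (m t)).
    assert (PL : forall g t, 0 < t -> derivable_pt_lim (fun s => pi s g) t (FG g t)).
    { intros g t Ht. apply dw_lim; auto. exact (PD t g ltac:(lra)). }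
    set (D := fun s => pi s j - pi s o).
    set (D' := fun t => D t * (c (m t) - 1)).
    assert (DL : forall t, 0 < t -> derivable_pt_lim D t (D' t)).
    { intros t Ht. replace (D' t) with (FG j t - FG o t) by (unfold D', FG, D, CT_field, c; ring).
      exact (derivable_pt_lim_minus _ _ _ _ _ (PL j t Ht) (PL o t Ht)). }
    set (V := fun s => D s * D s).
    set (V' := fun t => D' t * D t + D t * D' t).
    assert (VL : forall t, 0 < t -> derivable_pt_lim V t (V' t)).
    { intros t Ht. exact (derivable_pt_lim_mult _ _ _ _ _ (DL t Ht) (DL t Ht)). }
    assert (V'n : forall t, 0 < t -> V' t <= 0).
    { intros t Ht. unfold V', D'. pose proof (Hc01 _ (Im t ltac:(lra))). nra. }
    assert (Vmono := mono V V' VL V'n).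
    assert (Dcont : forall t, 0 < t -> continuity_pt D t).
    { intros t Ht. apply derivable_continuous_pt. exists (D' t). apply DL; exact Ht. }
    assert (Drc : forall eps, 0 < eps -> exists d, 0 < d /\ forall s, 0 <= s -> s < d -> Rabs (D s - D 0) < eps).
    { intros eps Heps.
      destruct (dw_cont _ _ _ _ (PD 0 j ltac:(lra)) (eps/2)) as [d1 [Hd1 E1]]; [lra|].
      destruct (dw_cont _ _ _ _ (PD 0 o ltac:(lra)) (eps/2)) as [d2 [Hd2 E2]]; [lra|].
      exists (Rmin d1 d2). split; [apply Rmin_pos; auto|]. intros s Hs Hsd.
      assert (Rmin d1 d2 <= d1) by apply Rmin_l. assert (Rmin d1 d2 <= d2) by apply Rmin_r.
      assert (A : Rabs (s - 0) = s) by (rewrite Rminus_0_r; apply Rabs_right; lra).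
      specialize (E1 s Hs ltac:(rewrite A; lra)). specialize (E2 s Hs ltac:(rewrite A; lra)).
      apply Rabs_lt_b in E1; apply Rabs_lt_b in E2. apply Rabs_lt_i. unfold D. lra. }
    assert (D0 : D 0 >= 0) by (unfold D; rewrite !P0; fold o in Hj; lra).
    assert (Dpos : forall t, 0 <= t -> D t >= 0).
    { intros t Ht. destruct (Rge_dec (D t) 0) as [|Hn]; auto. exfalso. apply Rnot_ge_lt in Hn.
      assert (Ht0 : 0 < t) by (destruct (Req_dec t 0) as [E|E]; [rewrite E in Hn; lra| lra]).
      destruct (Drc (- D t / 2)) as [d [Hd Hrc]]; [lra|].
      set (e := Rmin (d/2) (t/2)).
      assert (e0 : 0 < e) by (apply Rmin_pos; lra).
      assert (e1 : e <= d/2) by apply Rmin_l. assert (e2 : e <= t/2) by apply Rmin_r.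
      specialize (Hrc e ltac:(lra) ltac:(lra)). apply Rabs_lt_b in Hrc.
      assert (Vte : V t <= V e) by (apply Vmono; lra).
      destruct (Rlt_le_dec (D e) 0).
      + unfold V in Vte. nra.
      + destruct (Req_dec (D e) 0) as [Ez|Ez].
        * unfold V in Vte. rewrite Ez in Vte. nra.
        * destruct (Ranalysis5.IVT_interv (fun s => - D s) e t) as [z [Hz Hz0]].
          -- intros a Ha. apply (continuity_pt_opp D). apply Dcont. lra.
          -- lra.
          -- lra.
          -- lra.
          -- assert (V t <= V z) by (apply Vmono; lra). unfold V in *. nra. }
    assert (Mo : forall t, 0 <= t -> m t = pi t o).
    { intros t Ht. unfold m. apply adv. specialize (Dpos t Ht). unfold D in Dpos. fold o. lra. }
    assert (Sol : CT_sol f p0 (fun t => pi t o)).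
    { split; [rewrite P0; reflexivity|]. split; [intros; apply PI; auto|].
      intros t Ht.
      replace (f (pi t o) - pi t o) with (CT_field f0 f1 (pi t o) (AA1_beta0 (pi t) o) (AA1_beta1 (pi t) o)).
      { apply PD; auto. }
      unfold CT_field, AA1_beta0, AA1_beta1.
      change (pi t (other (advantaged (pi t)))) with (m t). rewrite Mo by auto. rewrite Hf. ring. }
    assert (Cvo := Hcv i Hi p0 Hb (fun t => pi t o) Sol).
    destruct (Eventually i Hi Hpi) as [d [Hd Ev]].
    set (cs := (1 + c (pe i)) / 2) in *.
    assert (Hcs : 0 <= cs < 1).
    { assert (Cl := Clt i Hi Hpi). pose proof (Hc01 _ Hpi). unfold cs. lra. }
    destruct (Cvo d Hd) as [T0 HT0].
    set (T := Rmax T0 1).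
    assert (T1 : 1 <= T) by apply Rmax_r. assert (T2 : T0 <= T) by apply Rmax_l.
    assert (D'le : forall t, T <= t -> D' t <= - (1 - cs) * D t).
    { intros t Ht. unfold D'. rewrite Mo by lra.
      assert (c (pi t o) <= cs) by (apply Ev; [apply PI; lra| apply HT0; lra]).
      pose proof (Dpos t ltac:(lra)). nra. }
    assert (D'n : forall t, 0 < t -> D' t <= 0).
    { intros t Ht. unfold D'. pose proof (Hc01 _ (Im t ltac:(lra))). pose proof (Dpos t ltac:(lra)). nra. }
    assert (Dmono := mono D D' DL D'n).
    intros eps Heps.
    assert (Hee : 0 < (1 - cs) * eps) by nra.
    exists (T + 1 / ((1 - cs) * eps) + 1). intros t Ht.
    assert (Hinv : 0 < 1 / ((1 - cs) * eps)) by (apply Rdiv_lt_0_compat; lra).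
    assert (Hd0 : pi t j >= pi t (other j)) by (specialize (Dpos t ltac:(lra)); unfold D in Dpos; fold o; lra).
    rewrite Rminus_0_r, (absD (pi t) j Hd0). fold o.
    change (pi t j - pi t o) with (D t).
    rewrite Rabs_right by (apply Dpos; lra).
    destruct (Rlt_le_dec (D t) eps) as [|Hge]; auto. exfalso.
    destruct (mvt D D' DL T t ltac:(lra) ltac:(lra)) as [c0 [Hc0 E]].
    assert (Dc : D t <= D c0) by (apply Dmono; lra).
    assert (Dl := D'le c0 ltac:(lra)).
    assert (DT1 : D T <= 1).
    { unfold D. pose proof (PI T j ltac:(lra)). pose proof (PI T o ltac:(lra)). unfold I01 in *. lra. }
    assert (K : (1 - cs) * eps * (t - T) >= 1 + (1 - cs) * eps).
    { assert (E1 : (1 - cs) * eps * (1 / ((1 - cs) * eps)) = 1) by (field; lra).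
      nra. }
    assert (D' c0 <= - (1 - cs) * eps) by nra.
    nra.
Qed.
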